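(* Let $\xi\in(0,1)$, $C=1-\xi$, and let $\lambda(x)=\sum_{i\ge2}\lambda_ix^{i-1}$, $\rho(x)=\sum_{j\ge2}\rho_jx^{j-1}$ be degree distributions. Let $b=\int_0^1\rho(x)dx$, $R=1-\frac{\int_0^1\rho(x)dx}{\int_0^1\lambda(x)dx}$ and $\Delta R=C-R$. Then $$\int_0^1\rho(1-x)\,dx-\int_0^\xi\bigl[1-\lambda^{-1}(x/\xi)\bigr]dx=\frac{b\,\Delta R}{\xi+\Delta R},$$ where $\lambda^{-1}$ denotes the inverse function of $\lambda:[0,1]\to[0,1]$.
   Context: A degree distribution is a polynomial $\gamma(x)=\sum_{k\ge2}\gamma_kx^{k-1}$ with $\gamma_k\ge0$ and $\sum_k\gamma_k=1$; in particular $\lambda$ is strictly increasing on $[0,1]$ with $\lambda(0)=0$, $\lambda(1)=1$, so $\lambda^{-1}$ is well defined on $[0,1]$. *)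

(* Defs.v *)
From HB Require Import structures.
From mathcomp Require Import all_boot all_order all_algebra.
From mathcomp Require Import all_classical all_reals all_analysis.
Set Implicit Arguments. Unset Strict Implicit. Unset Printing Implicit Defensive.
Import Order.TTheory GRing.Theory Num.Theory.
Import numFieldNormedType.Exports.
Local Open Scope classical_set_scope.
Local Open Scope ring_scope.

(* A degree distribution gamma(x) = \sum_{k>=2} gamma_k x^(k-1), represented
   as a polynomial whose coefficient of x^(k-1) is gamma_k:
   constant term 0 (no k = 1 term), nonnegative coefficients, summing to 1. *)
Definition degree_distribution (R : realType) (p : {poly R}) : Prop :=
  p`_0 = 0 /\ (forall i, 0 <= p`_i) /\ \sum_(i < size p) p`_i = 1.

Definition integral_ab (R : realType) (a b : R) (f : R -> R) : R :=
  Rintegral (@lebesgue_measure R) `[a, b] f.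

(* Main.v *)
Require Import Defs.
From HB Require Import structures.
From mathcomp Require Import all_boot all_order all_algebra.
From mathcomp Require Import all_classical all_reals all_analysis.
Import Order.TTheory GRing.Theory Num.Theory.
Import numFieldNormedType.Exports.
Local Open Scope classical_set_scope.
Local Open Scope ring_scope.
Section P.
Variable R : realType.
Implicit Types p : {poly R}.

Lemma dd_exists p : degree_distribution p -> exists i : 'I_(size p), (0 < i)%N /\ 0 < p`_i.
Proof.
move=> [p0 [pge sum1]].
apply/not_existsP => H.
have : \sum_(i < size p) p`_i = 0.
  apply: big1 => i _.
  have := H i; case: (posnP i) => [i0 _|ip].
    by rewrite i0.
  move=> /not_andP [//|]; rewrite lt_neqAle pge andbT => /negP; rewrite negbK eq_sym => /eqP //.
by rewrite sum1 => /eqP; rewrite oner_eq0.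
Qed.

Lemma dd_at0 p : degree_distribution p -> p.[0] = 0.
Proof. by move=> [p0 _]; rewrite horner_coef0. Qed.

Lemma dd_at1 p : degree_distribution p -> p.[1] = 1.
Proof. by move=> [_ [_ s]]; rewrite horner_coef; under eq_bigr do rewrite expr1n mulr1. Qed.

Lemma dd_lt p : degree_distribution p -> forall x y, 0 <= x -> x < y -> p.[x] < p.[y].
Proof.
move=> dp x y x0 xy; have [i [i0 pi]] := dd_exists _ dp.
case: dp => [p0 [pge _]].
rewrite !horner_coef -subr_gt0 -sumrB (bigD1 i) //=.
apply: (@lt_le_trans _ _ (p`_i * y ^+ i - p`_i * x ^+ i)).
  by rewrite -mulrBr mulr_gt0 // subr_gt0 ltrXn2r // -lt0n.
rewrite lerDl; apply: sumr_ge0 => j _; rewrite -mulrBr mulr_ge0 // subr_ge0.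
rewrite lerXn2r ?nnegrE ?(ltW xy) //; exact: (le_trans x0 (ltW xy)).
Qed.

Lemma dd_ge0 p : degree_distribution p -> forall x, 0 <= x -> 0 <= p.[x].
Proof.
move=> [_ [pge _]] x x0; rewrite horner_coef; apply: sumr_ge0 => i _.
by rewrite mulr_ge0 // exprn_ge0.
Qed.

Lemma dd_lb p : degree_distribution p -> forall x, 0 <= x <= 1 -> x ^+ size p <= p.[x].
Proof.
move=> [_ [pge s]] x /andP[x0 x1]; rewrite horner_coef.
rewrite -[X in X <= _]mul1r -s mulr_suml; apply: ler_sum => i _.
by apply: ler_wpM2l => //; apply: ler_wiXn2l => //; apply: ltnW.
Qed.
End P.
Arguments dd_exists {R p}. Arguments dd_at0 {R p}. Arguments dd_at1 {R p}. Arguments dd_lt {R p}. Arguments dd_ge0 {R p}. Arguments dd_lb {R p}.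
Lemma hq (R : realType) (q : {poly R}) (a b : R) : derivable_oo_LRcontinuous (horner q) a b.
Proof.
split.
- by move=> x _; exact: derivable_horner.
- by apply: cvg_at_right_filter; exact: continuous_horner.
- by apply: cvg_at_left_filter; exact: continuous_horner.
Qed.

Lemma subst_poly (R : realType) (q : {poly R}) (G : R -> R) :
  {in `[0, 1] &, {homo horner q : x y / x < y}} ->
  {within `[q.[0], q.[1]], continuous G} ->
  Rintegral lebesgue_measure `[q.[0], q.[1]] G =
  Rintegral lebesgue_measure `[0, 1] (fun u => G q.[u] * (q^`()).[u]).
Proof.
move=> hom cG.
rewrite /Rintegral (@integration_by_substitution_increasing _ (horner q)) //.
- by congr fine; apply: eq_integral => x _; rewrite -derivE.
- by rewrite -derivE => x _; exact: continuous_horner.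
- by rewrite -derivE; apply/cvg_ex; eexists; apply: cvg_at_right_filter; exact: continuous_horner.
- by rewrite -derivE; apply/cvg_ex; eexists; apply: cvg_at_left_filter; exact: continuous_horner.
- exact: hq.
Qed.
Section S.
Variable R : realType.
Notation mu := (@lebesgue_measure R).

Lemma integ01 (g : R -> R) (a b : R) : {within `[a, b], continuous g} -> mu.-integrable `[a, b] (EFin \o g).
Proof. by move=> cg; apply: continuous_compact_integrable => //; exact: segment_compact. Qed.

Lemma L_onem (G : R -> R) : {within `[0, 1], continuous G} ->
  integral_ab 0 1 (fun x => G (1 - x)) = integral_ab 0 1 G.
Proof.
move=> cG; rewrite /integral_ab (@Rintegration_by_substitution_onem _ G 1) ?ler01 ?lexx //.
by rewrite unstable.onem1.
Qed.

Lemma L_scale (g : R -> R) (xi : R) : 0 < xi ->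
  {within `[0, 1], continuous g} ->
  {within `[0, xi], continuous (fun x => g (x / xi))} ->
  integral_ab 0 xi (fun x => g (x / xi)) = xi * integral_ab 0 1 g.
Proof.
move=> xi0 cg cG.
have hom : {in `[0, 1] &, {homo horner (xi *: 'X) : x y / x < y}}.
  by move=> x y _ _ xy; rewrite !hornerZ !hornerX ltr_pM2l.
have e0 : (xi *: 'X : {poly R}).[0] = 0 by rewrite hornerZ hornerX mulr0.
have e1 : (xi *: 'X : {poly R}).[1] = xi by rewrite hornerZ hornerX mulr1.
have := @subst_poly R (xi *: 'X) (fun x => g (x / xi)) hom.
rewrite e0 e1 /integral_ab => /(_ cG) ->.
rewrite -RintegralZl //; last exact: integ01.
apply: eq_Rintegral => u _.
rewrite derivZ derivX alg_polyC hornerC hornerZ hornerX mulrC; congr (_ * g _).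
by rewrite mulrC mulKf ?gt_eqF.
Qed.
End S.
Section T.
Variable R : realType.
Notation mu := (@lebesgue_measure R).

Lemma dd_cancel (lam : {poly R}) (lam_inv : R -> R) : degree_distribution lam ->
  (forall y, 0 <= y <= 1 -> 0 <= lam_inv y <= 1 /\ lam.[lam_inv y] = y) ->
  {in `[0, 1], cancel (horner lam) lam_inv}.
Proof.
move=> dl hinv u; rewrite in_itv /= => /andP[u0 u1].
have l01 : 0 <= lam.[u] <= 1.
  rewrite dd_ge0 //=; rewrite -(dd_at1 dl).
  by case: (u1); rewrite le_eqVlt => /orP[/eqP->|/(dd_lt dl _ _ u0)/ltW].
have [/andP[v0 v1] e] := hinv _ l01.
case: (ltgtP (lam_inv lam.[u]) u) => // h.
- by have := dd_lt dl _ _ v0 h; rewrite e ltxx.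
- by have := dd_lt dl _ _ u0 h; rewrite e ltxx.
Qed.

Lemma inv_cont (lam : {poly R}) (lam_inv : R -> R) (c : R) : degree_distribution lam ->
  (forall y, 0 <= y <= 1 -> 0 <= lam_inv y <= 1 /\ lam.[lam_inv y] = y) ->
  0 < c -> {within `[0, c], continuous (fun x => lam_inv (x / c))}.
Proof.
move=> dl hinv c0.
have := @segment_can_le_continuous R 0 1 (horner (c *: lam)) (fun x => lam_inv (x / c)) ler01.
rewrite !hornerZ (dd_at0 dl) (dd_at1 dl) mulr0 mulr1; apply.
  exact: continuous_subspaceT (@continuous_horner R _).
move=> u hu /=; rewrite hornerZ mulrAC divff ?gt_eqF // mul1r.
exact: dd_cancel.
Qed.

Lemma inv_cont1 (lam : {poly R}) (lam_inv : R -> R) : degree_distribution lam ->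
  (forall y, 0 <= y <= 1 -> 0 <= lam_inv y <= 1 /\ lam.[lam_inv y] = y) ->
  {within `[0, 1], continuous lam_inv}.
Proof.
move=> dl hinv; have := @inv_cont lam lam_inv 1 dl hinv ltr01.
by have -> : (fun x => lam_inv (x / 1)) = lam_inv by apply/funext => x; rewrite divr1.
Qed.

Lemma L_inv (lam : {poly R}) (lam_inv : R -> R) : degree_distribution lam ->
  (forall y, 0 <= y <= 1 -> 0 <= lam_inv y <= 1 /\ lam.[lam_inv y] = y) ->
  integral_ab 0 1 lam_inv = 1 - integral_ab 0 1 (horner lam).
Proof.
move=> dl hinv.
have hom : {in `[0, 1] &, {homo horner lam : x y / x < y}}.
  move=> x y; rewrite in_itv /= => /andP[x0 _] _; exact: dd_lt dl _ _ x0.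
have cI := @inv_cont1 lam lam_inv dl hinv.
have := @subst_poly R lam lam_inv hom.
rewrite (dd_at0 dl) (dd_at1 dl) /integral_ab => /(_ cI) ->.
rewrite (@eq_Rintegral _ _ _ mu _ (fun u => ('X : {poly R}).[u] * (lam^`()).[u])); last first.
  move=> u hu; rewrite hornerX (@dd_cancel lam lam_inv dl hinv) //; by move: hu; rewrite inE.
rewrite (@Rintegration_by_parts R (horner 'X) (horner lam) (horner (deriv 'X)) (horner (lam^`())) 0 1 ltr01).
- rewrite !hornerX (dd_at1 dl) mul0r subr0 mulr1; congr (_ - _).
  by apply: eq_Rintegral => u _; rewrite derivX hornerC mul1r.
- exact: continuous_subspaceT (@continuous_horner R _).
- exact: hq.
- by move=> u _; rewrite -derivE.
- exact: continuous_subspaceT (@continuous_horner R _).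
- exact: hq.
- by move=> u _; rewrite -derivE.
Qed.

Lemma dd_int_pos (p : {poly R}) : degree_distribution p -> 0 < integral_ab 0 1 (horner p).
Proof.
move=> dp.
have cX : {within `[0, 1], continuous (fun x : R => x ^+ size p)}.
  exact: continuous_subspaceT (@exprn_continuous R _).
apply: (@lt_le_trans _ _ (integral_ab 0 1 (fun x => x ^+ size p))).
  rewrite -L_onem //.
  rewrite /integral_ab.
  have := @Rintegral_onemXn R (size p); rewrite /unstable.onem => ->.
  by rewrite invr_gt0 ltr0n.
apply: le_Rintegral => //.
- exact: integ01.
- exact: integ01 (continuous_subspaceT (@continuous_horner R _)).
- by move=> x /=; rewrite in_itv /= => hx; apply: dd_lb.
Qed.
End T.
From mathcomp Require Import ring lra.

Theorem lemma1 (R : realType) (xi : R) (lam rho : {poly R})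
  (lam_inv : R -> R) :
  0 < xi < 1 ->
  degree_distribution lam -> degree_distribution rho ->
  (* lam_inv is the inverse function of lam : [0,1] -> [0,1] *)
  (forall y, 0 <= y <= 1 -> 0 <= lam_inv y <= 1 /\ lam.[lam_inv y] = y) ->
  let C := 1 - xi in
  let b := integral_ab 0 1 (fun x => rho.[x]) in
  let Rr := 1 - integral_ab 0 1 (fun x => rho.[x]) /
                integral_ab 0 1 (fun x => lam.[x]) in
  let dR := C - Rr in
  integral_ab 0 1 (fun x => rho.[1 - x])
    - integral_ab 0 xi (fun x => 1 - lam_inv (x / xi))
  = b * dR / (xi + dR).
Proof.
move=> /andP[xi0 xi1] dl dr hinv C b Rr dR; rewrite /dR /Rr /C /b.
have cI := @inv_cont1 R lam lam_inv dl hinv.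
have cIx := @inv_cont R lam lam_inv xi dl hinv xi0.
have e1 : integral_ab 0 1 (fun x => rho.[1 - x]) = integral_ab 0 1 (fun x => rho.[x]).
  by apply: (@L_onem R (horner rho)); exact: continuous_subspaceT (@continuous_horner R _).
have c1 : {within `[0, 1], continuous (fun x => 1 - lam_inv x)}.
  by move=> x; apply: cvgB; [exact: cvg_cst | exact: cI x].
have c2 : {within `[0, xi], continuous (fun x => 1 - lam_inv (x / xi))}.
  by move=> x; apply: cvgB; [exact: cvg_cst | exact: cIx x].
have e2 := @L_scale R (fun x => 1 - lam_inv x) xi xi0 c1 c2.
have e3 : integral_ab 0 1 (fun x => 1 - lam_inv x) = integral_ab 0 1 (horner lam).
  rewrite /integral_ab RintegralB //; last exact: integ01.
    rewrite Rintegral_cst //.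
    rewrite mul1r [fine _](_ : _ = 1); last first.
      have h := @lebesgue_measure_itv R `[0%R, 1%R]; rewrite /= lte_fin ltr01 oppr0 adde0 in h.
      by transitivity (fine (1%:E : \bar R)); [congr fine; exact: h | by []].
    have := @L_inv R lam lam_inv dl hinv; rewrite /integral_ab => ->.
    by rewrite subKr.
  by apply: integ01 => x; exact: cvg_cst.
rewrite e1 e2 e3 /=.
have a0 := @dd_int_pos R lam dl.
have b0 := @dd_int_pos R rho dr.
move: a0 b0.
set a := integral_ab 0 1 (horner lam).
set bb := integral_ab 0 1 (horner rho) => a0 b0.
have -> : xi + (1 - xi - (1 - bb / a)) = bb / a by ring.
field.
by rewrite !gt_eqF.
Qed.
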